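(* Let $c>0$ and $\eta_0>0$. For measurable complex-valued functions $z_1,z_2$ on $\mathbb{R}$ with $\sup_{\omega\in\mathbb{R},i=1,2}|z_i(\omega)|\le1$, write $z=(z_1,z_2)$ and define on $\mathbb{R}_+\times\mathbb{R}$ $$\Psi_z(\tilde\lambda,\omega)=\frac{z_1(\omega)}{(c+i\omega+\tilde\lambda)(c+i\omega+\tilde\lambda-\tilde\lambda z_2(\omega))}.$$ Then: (i) the function $\tilde\lambda\mapsto\int_{-\infty}^\infty\Psi_z(\tilde\lambda,\omega)d\omega$ is continuously differentiable on $\mathbb{R}_+$ and its derivative is bounded over $\tilde\lambda\in[0,\eta_0]$ by a bound independent of $z$; (ii) there exists $K>0$ depending only on $c$ and $\eta_0$ such that for any $W\ge1$ or $W=\infty$ and any $\tilde z=(\tilde z_1,\tilde z_2)$ also satisfying $\sup_{\omega,i}|\tilde z_i(\omega)|\le1$, $$\sup_{\tilde\lambda\in[0,\eta_0]}\Big|\int\Psi_z(\tilde\lambda,\omega)d\omega-\int\Psi_{\tilde z}(\tilde\lambda,\omega)d\omega\Big|\le K\Big(\max_{i=1,2}\sup_{\omega\in[-W,W]}|z_i(\omega)-\tilde z_i(\omega)|+\frac1W\Big).$$ *)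

(* Defs.v *)
From HB Require Import structures.
From mathcomp Require Import all_boot all_order all_algebra.
From mathcomp Require Import all_classical all_reals all_analysis.
From mathcomp Require Import complex.
Set Implicit Arguments. Unset Strict Implicit. Unset Printing Implicit Defensive.
Import Order.TTheory GRing.Theory Num.Theory.
Local Open Scope ring_scope.
Local Open Scope classical_set_scope.
Local Open Scope complex_scope.

Notation normc := ComplexField.Normc.normc.

Definition cmeasurable (R : realType) (f : R -> R[i]) : Prop :=
  measurable_fun [set: R] (fun w => complex.Re (f w)) /\
  measurable_fun [set: R] (fun w => complex.Im (f w)).

Definition cintegral (R : realType) (f : R -> R[i]) : R[i] :=
  (Rintegral (@lebesgue_measure R) [set: R] (fun w => complex.Re (f w)))%:C
  + 'i * (Rintegral (@lebesgue_measure R) [set: R] (fun w => complex.Im (f w)))%:C.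

Definition Psi (R : realType) (c : R) (z1 z2 : R -> R[i]) (lam w : R) : R[i] :=
  z1 w / ((c%:C + 'i * w%:C + lam%:C) *
          (c%:C + 'i * w%:C + lam%:C - lam%:C * z2 w)).

Definition PsiInt (R : realType) (c : R) (z1 z2 : R -> R[i]) (lam : R) : R[i] :=
  cintegral (Psi c z1 z2 lam).

Definition admissible (R : realType) (z1 z2 : R -> R[i]) : Prop :=
  cmeasurable z1 /\ cmeasurable z2 /\
  (forall w, normc (z1 w) <= 1) /\ (forall w, normc (z2 w) <= 1).

Definition C1_on_Rplus (R : realType) (F D : R -> R[i]) : Prop :=
  (forall l : R, 0 <= l -> forall e : R, 0 < e -> exists d : R, 0 < d /\
     forall h : R, h != 0 -> `|h| < d -> 0 <= l + h ->
       normc ((F (l + h) - F l) / h%:C - D l) < e) /\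
  (forall l : R, 0 <= l -> forall e : R, 0 < e -> exists d : R, 0 < d /\
     forall l' : R, 0 <= l' -> `|l' - l| < d -> normc (D l' - D l) < e).

(* Main.v *)
Require Import Defs.
From HB Require Import structures.
From mathcomp Require Import all_boot all_order all_algebra.
From mathcomp Require Import all_classical all_reals all_analysis.
From mathcomp Require Import complex.
Import Order.TTheory GRing.Theory Num.Theory.
Local Open Scope ring_scope.
Local Open Scope complex_scope.
From mathcomp Require Import measurable_realfun.
From mathcomp Require Import ring lra.
Import numFieldNormedType.Exports.

Module Helpers.
Local Open Scope classical_set_scope.
Lemma measurable_inv (R : realType) : measurable_fun setT (@GRing.inv R).
Proof.
rewrite -(setUv [set (0:R)]).
apply/measurable_funU; [by [] | exact: measurableC |].
split; first exact: measurable_fun_set1.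
apply: open_continuous_measurable_fun.
  by rewrite openC; apply: accessible_closed_set1; exact: hausdorff_accessible; exact: norm_hausdorff.
by move=> x; rewrite inE => /eqP x0; exact: inv_continuous.
Qed.
Section C.
Context {R : realType}.
Local Open Scope complex_scope.
Implicit Types f g : R -> R[i].

Lemma cmeas_cst (k : R[i]) : cmeasurable (fun _ : R => k).
Proof. by split; exact: measurable_cst. Qed.

Lemma cmeas_id : cmeasurable (fun w : R => w%:C).
Proof. by split => /=; [exact: measurable_id | exact: measurable_cst]. Qed.

Lemma cmeas_add f g : cmeasurable f -> cmeasurable g -> cmeasurable (fun w => f w + g w).
Proof.
move=> [f1 f2] [g1 g2]; split.
- have -> : (fun w => complex.Re (f w + g w)) = (fun w => complex.Re (f w) + complex.Re (g w)).
    by apply: funext => w; case: (f w) => ??; case: (g w).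
  exact: measurable_funD.
- have -> : (fun w => complex.Im (f w + g w)) = (fun w => complex.Im (f w) + complex.Im (g w)).
    by apply: funext => w; case: (f w) => ??; case: (g w).
  exact: measurable_funD.
Qed.

Lemma cmeas_opp f : cmeasurable f -> cmeasurable (fun w => - f w).
Proof.
move=> [f1 f2]; split.
- have -> : (fun w => complex.Re (- f w)) = (fun w => - complex.Re (f w)).
    by apply: funext => w; case: (f w).
  exact: measurable_funN.
- have -> : (fun w => complex.Im (- f w)) = (fun w => - complex.Im (f w)).
    by apply: funext => w; case: (f w).
  exact: measurable_funN.
Qed.

Lemma cmeas_sub f g : cmeasurable f -> cmeasurable g -> cmeasurable (fun w => f w - g w).
Proof. by move=> hf hg; apply: cmeas_add => //; exact: cmeas_opp. Qed.

Lemma cmeas_mul f g : cmeasurable f -> cmeasurable g -> cmeasurable (fun w => f w * g w).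
Proof.
move=> [f1 f2] [g1 g2]; split.
- have -> : (fun w => complex.Re (f w * g w)) = (fun w => complex.Re (f w) * complex.Re (g w) - complex.Im (f w) * complex.Im (g w)).
    by apply: funext => w; case: (f w) => ??; case: (g w).
  by apply: measurable_funB; apply: measurable_funM.
- have -> : (fun w => complex.Im (f w * g w)) = (fun w => complex.Re (f w) * complex.Im (g w) + complex.Im (f w) * complex.Re (g w)).
    by apply: funext => w; case: (f w) => ??; case: (g w).
  by apply: measurable_funD; apply: measurable_funM.
Qed.

Lemma cmeas_inv f : cmeasurable f -> cmeasurable (fun w => (f w)^-1).
Proof.
move=> [f1 f2].
have mn : measurable_fun setT (fun w => (complex.Re (f w) ^+ 2 + complex.Im (f w) ^+ 2)^-1).
  apply: (measurableT_comp (measurable_inv R)).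
  by apply: measurable_funD; apply: measurable_funX.
split.
- have -> : (fun w => complex.Re ((f w)^-1)) = (fun w => complex.Re (f w) * (complex.Re (f w) ^+ 2 + complex.Im (f w) ^+ 2)^-1).
    by apply: funext => w; case: (f w).
  exact: measurable_funM.
- have -> : (fun w => complex.Im ((f w)^-1)) = (fun w => - (complex.Im (f w) * (complex.Re (f w) ^+ 2 + complex.Im (f w) ^+ 2)^-1)).
    by apply: funext => w; case: (f w).
  by apply: measurable_funN; exact: measurable_funM.
Qed.
Lemma normc_ge0 (x : R[i]) : 0 <= normc x.
Proof. by case: x => a b; exact: sqrtr_ge0. Qed.
Lemma normc_Re (x : R[i]) : `|complex.Re x| <= normc x.
Proof.
case: x => a b /=; rewrite -sqrtr_sqr ler_sqrt; last by rewrite addr_ge0 // sqr_ge0.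
by rewrite lerDl sqr_ge0.
Qed.
Lemma normc_Im (x : R[i]) : `|complex.Im x| <= normc x.
Proof.
case: x => a b /=; rewrite -sqrtr_sqr ler_sqrt; last by rewrite addr_ge0 // sqr_ge0.
by rewrite lerDr sqr_ge0.
Qed.
Lemma normc_le (x : R[i]) : normc x <= `|complex.Re x| + `|complex.Im x|.
Proof.
case: x => a b /=.
have h : 0 <= `|a| + `|b| by rewrite addr_ge0.
rewrite -[X in _ <= X](ger0_norm h) -sqrtr_sqr ler_sqrt; last exact: sqr_ge0.
rewrite sqrrD -(real_normK (num_real a)) -(real_normK (num_real b)).
rewrite -addrA lerD2l lerDr.
by rewrite mulrn_wge0 // mulr_ge0.
Qed.
Lemma normc_real (r : R) : normc r%:C = `|r|.
Proof. by rewrite /= expr0n /= addr0 sqrtr_sqr. Qed.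
Lemma normc_sym (x y : R[i]) : normc (x - y) = normc (y - x).
Proof. by rewrite -normcN opprB. Qed.
Notation mu := (@lebesgue_measure R).
Definition cint (f : R -> R[i]) :=
  mu.-integrable setT (EFin \o (fun w => complex.Re (f w))) /\
  mu.-integrable setT (EFin \o (fun w => complex.Im (f w))).

Lemma rint_bound (h G : R -> R) : measurable_fun setT h ->
  mu.-integrable setT (EFin \o G) -> (forall w, `|h w| <= G w) ->
  mu.-integrable setT (EFin \o h) /\ `|Rintegral mu setT h| <= Rintegral mu setT G.
Proof.
move=> mh iG hG.
have iabs : mu.-integrable setT (EFin \o (fun w => `|h w|)).
  apply: le_integrable iG => //.
    by apply/measurable_EFinP; exact: measurableT_comp.
  move=> w _ /=; rewrite lee_fin normr_id (le_trans (hG w)) //.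
  exact: ler_norm.
have ih : mu.-integrable setT (EFin \o h).
  apply: le_integrable iG => //.
    by apply/measurable_EFinP.
  by move=> w _ /=; rewrite lee_fin (le_trans (hG w)) // ler_norm.
split => //.
apply: le_trans (le_normr_Rintegral _ ih) _ => //.
by apply: le_Rintegral => // w _; exact: hG.
Qed.
End C.
Section S.
Context {R : realType}.
Notation mu := (@lebesgue_measure R).
Definition gb (b : R) (w : R) : R := ((b + `|w|) ^+ 2)^-1.
Lemma gb_ge0 (b w : R) : 0 < b -> 0 <= gb b w.
Proof. move=> hb; rewrite /gb invr_ge0 sqr_ge0 //. Qed.
Lemma gb_cont (b : R) : 0 < b -> continuous (gb b).
Proof.
move=> hb x; rewrite /gb.
apply: cvgV; first by rewrite sqrf_eq0 gt_eqF // ltr_wpDr.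
apply: cvgM; apply: cvgD; try exact: cvg_cst; exact: norm_continuous.
Qed.
Lemma gb_deriv (b x : R) : 0 < b -> 0 <= x ->
  is_derive x 1 (fun y : R => - (y + b)^-1) (gb b x).
Proof.
move=> hb hx.
have hne : shift b x != 0 by rewrite /= gt_eqF // ltr_wpDl.
have H2 := is_deriveV hne (is_derive_shift x 1 b).
have H3 := is_deriveN H2.
apply: (is_derive_eq H3).
by rewrite /gb ger0_norm //= scaler1 opprK addrC.
Qed.

Lemma gb_int0y (b : R) : 0 < b ->
  (\int[mu]_(x in `[0%R, +oo[) (gb b x)%:E = (b^-1)%:E)%E.
Proof.
move=> hb.
rewrite (@ge0_continuous_FTC2y _ _ (fun y : R => - (y + b)^-1) 0 0).
- by rewrite add0r EFinN oppeK add0r.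
- by move=> x _; exact: gb_ge0.
- by apply: continuous_subspaceT => x; exact: gb_cont.
- rewrite -oppr0; apply: cvgN.
  apply/gtr0_cvgV0; last exact: cvg_addrr.
  by near=> x; apply: ltr_wpDl => //; near: x; exact: nbhs_pinfty_ge.
- by move=> x x0; have := gb_deriv _ _ hb (ltW x0); case.
- apply: cvg_at_right_filter.
  have := gb_deriv _ _ hb (lexx 0).
  by move=> [/derivable1_diffP/differentiable_continuous].
- move=> x; rewrite in_itv /= andbT => x0.
  by rewrite derive1E; have [_ ->] := gb_deriv _ _ hb (ltW x0).
Unshelve. all: by end_near.
Qed.
Lemma gb_intT (b : R) : 0 < b ->
  (\int[mu]_x (gb b x)%:E = (2 * b^-1)%:E)%E.
Proof.
move=> hb.
rewrite ge0_symfun_integralT.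
- by rewrite -set_itvcy gb_int0y // -EFinM.
- by move=> x; exact: gb_ge0.
- exact: gb_cont.
- by move=> x; rewrite /gb /= normrN.
Qed.

Lemma gb_meas (b : R) : 0 < b -> measurable_fun setT (gb b).
Proof. by move=> hb; apply: continuous_measurable_fun; exact: gb_cont. Qed.

Lemma gb_integrable (b : R) : 0 < b -> mu.-integrable setT (EFin \o gb b).
Proof.
move=> hb; apply/integrableP; split.
  by apply/measurable_EFinP; exact: gb_meas.
under eq_integral do rewrite /= ger0_norm ?gb_ge0 //.
by rewrite gb_intT // ltry.
Qed.

Lemma gb_Rint (b : R) : 0 < b -> Rintegral mu setT (gb b) = 2 * b^-1.
Proof. by move=> hb; rewrite /Rintegral gb_intT. Qed.
End S.

Local Open Scope classical_set_scope.
Section C2.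
Context {R : realType}.
Local Open Scope complex_scope.
Notation mu := (@lebesgue_measure R).
Implicit Types f g : R -> R[i].

Lemma cint_bound f (G : R -> R) : cmeasurable f ->
  mu.-integrable setT (EFin \o G) -> (forall w, normc (f w) <= G w) -> cint f.
Proof.
move=> [m1 m2] iG hG; split.
- by case: (rint_bound _ _ m1 iG (fun w => le_trans (normc_Re _) (hG w))).
- by case: (rint_bound _ _ m2 iG (fun w => le_trans (normc_Im _) (hG w))).
Qed.

Lemma cplx_eta (a b : R) : a%:C + 'i * b%:C = a +i* b.
Proof. by apply/eqP; rewrite eq_complex /= !mul0r !mul1r !subr0 !addr0 !add0r !eqxx. Qed.

Lemma cintegral_norm f (G : R -> R) : cmeasurable f ->
  mu.-integrable setT (EFin \o G) -> (forall w, normc (f w) <= G w) ->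
  normc (cintegral f) <= 2 * Rintegral mu setT G.
Proof.
move=> [m1 m2] iG hG.
have [_ h1] := rint_bound _ _ m1 iG (fun w => le_trans (normc_Re _) (hG w)).
have [_ h2] := rint_bound _ _ m2 iG (fun w => le_trans (normc_Im _) (hG w)).
rewrite /cintegral cplx_eta; apply: le_trans (normc_le _) _ => /=.
by rewrite mulr2n mulrDl mul1r lerD.
Qed.

Lemma cintegralB f g : cint f -> cint g ->
  cintegral (fun w => f w - g w) = cintegral f - cintegral g.
Proof.
move=> [f1 f2] [g1 g2]; rewrite /cintegral !cplx_eta.
have -> : (fun w => complex.Re (f w - g w)) = (fun w => complex.Re (f w) - complex.Re (g w)).
  by apply: funext => w; case: (f w) => ??; case: (g w).
have -> : (fun w => complex.Im (f w - g w)) = (fun w => complex.Im (f w) - complex.Im (g w)).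
  by apply: funext => w; case: (f w) => ??; case: (g w).
by rewrite !RintegralB.
Qed.

Lemma cintegralZ (r : R) f : cint f ->
  cintegral (fun w => r%:C * f w) = r%:C * cintegral f.
Proof.
move=> [f1 f2]; rewrite /cintegral !cplx_eta.
have -> : (fun w => complex.Re (r%:C * f w)) = (fun w => r * complex.Re (f w)).
  by apply: funext => w; case: (f w) => ?? /=; rewrite mul0r subr0.
have -> : (fun w => complex.Im (r%:C * f w)) = (fun w => r * complex.Im (f w)).
  by apply: funext => w; case: (f w) => ?? /=; rewrite mul0r addr0.
rewrite !RintegralZl //.
by apply/eqP; rewrite eq_complex /= mul0r subr0 mul0r addr0 !eqxx.
Qed.
End C2.

Local Open Scope classical_set_scope.
Section P.
Context {R : realType}.
Local Open Scope complex_scope.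
Variable c : R.
Hypothesis hc : 0 < c.

Definition av (l w : R) : R[i] := c%:C + 'i * w%:C + l%:C.
Definition bv (z : R[i]) (l w : R) : R[i] := av l w - l%:C * z.

Lemma Re_av l w : complex.Re (av l w) = c + l.
Proof. rewrite /av /=; ring. Qed.
Lemma Im_av l w : complex.Im (av l w) = w.
Proof. rewrite /av /=; ring. Qed.
Lemma Re_bv z l w : complex.Re (bv z l w) = c + l - l * complex.Re z.
Proof. case: z => x y; rewrite /bv /av /=; ring. Qed.
Lemma Im_bv z l w : complex.Im (bv z l w) = w - l * complex.Im z.
Proof. case: z => x y; rewrite /bv /av /=; ring. Qed.

Lemma na_ge l w : 0 <= l -> c <= normc (av l w) /\ `|w| <= normc (av l w).
Proof.
move=> hl; split.
- apply: le_trans (normc_Re _); rewrite Re_av ger0_norm; last by have := hc; lra.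
  by have := hc; lra.
- by have := normc_Im (av l w); rewrite Im_av.
Qed.

Lemma nb_ge z l w : 0 <= l -> normc z <= 1 ->
  c <= normc (bv z l w) /\ `|w| <= normc (bv z l w) + l.
Proof.
move=> hl hz.
have hre : `|complex.Re z| <= 1 := le_trans (normc_Re z) hz.
have him : `|complex.Im z| <= 1 := le_trans (normc_Im z) hz.
split.
- apply: le_trans (normc_Re _) ; rewrite Re_bv.
  have : l * complex.Re z <= l.
    apply: le_trans (ler_norm _) _; rewrite normrM ger0_norm //.
    by rewrite -[X in _ <= X]mulr1 ler_wpM2l.
  move=> h; apply: le_trans (ler_norm _); have := hc; lra.
- have := normc_Im (bv z l w); rewrite Im_bv => h.
  have : `|l * complex.Im z| <= l.
    by rewrite normrM ger0_norm // -[X in _ <= X]mulr1 ler_wpM2l.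
  move=> h2.
  have h3 : `|w| <= `|w - l * complex.Im z| + `|l * complex.Im z|.
    by rewrite -[X in `|X|](subrK (l * complex.Im z)) ler_normD.
  lra.
Qed.

Definition QQ (L : R) := 2 + (1 + L) / c + c + 2 * L.

Lemma QQ_ge L : 0 <= L -> 1 <= QQ L /\ L <= QQ L /\ c <= QQ L.
Proof.
move=> hL; have hc0 := hc.
have : 0 <= (1 + L) / c by apply: divr_ge0; lra.
rewrite /QQ; lra.
Qed.

Lemma rho_le_x (x w l L : R) : 0 <= l <= L -> c <= x -> `|w| <= x + l ->
  1 + `|w| <= QQ L * x.
Proof.
move=> /andP[hl hlL] hx hw; have hc0 := hc; have hL0 : 0 <= L by lra.
have h1 : 1 <= x / c by rewrite ler_pdivlMr // mul1r.
have h2 : l <= L * (x / c).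
  by apply: le_trans hlL _; rewrite -[X in X <= _]mulr1 ler_wpM2l //; lra.
have -> : QQ L * x = 2 * x + (x / c) + L * (x / c) + c * x + 2 * L * x.
  by rewrite /QQ; field; rewrite gt_eqF.
have : 0 <= c * x by apply: mulr_ge0; lra.
have : 0 <= L * x by apply: mulr_ge0; lra.
lra.
Qed.

Lemma rho_le_a l w L : 0 <= l <= L -> 1 + `|w| <= QQ L * normc (av l w).
Proof.
move=> hl; have [h1 h2] := na_ge l w (andP hl).1.
have h3 : `|w| <= normc (av l w) + l by apply: le_trans h2 _; rewrite lerDl (andP hl).1.
exact: rho_le_x hl h1 h3.
Qed.

Lemma rho_le_b z l w L : 0 <= l <= L -> normc z <= 1 ->
  1 + `|w| <= QQ L * normc (bv z l w).
Proof.
move=> hl hz; have [h1 h2] := nb_ge z l w (andP hl).1 hz.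
exact: rho_le_x hl h1 h2.
Qed.

Lemma normc_gt0 (x : R[i]) : c <= normc x -> 0 < normc x.
Proof. by move=> h; apply: lt_le_trans h. Qed.

Lemma ninv_le (x : R[i]) : c <= normc x -> normc (x^-1) <= c^-1.
Proof.
move=> h; rewrite ComplexField.Normc.normcV lef_pV2 ?posrE //; exact: normc_gt0.
Qed.

Lemma inv_xy_decay (x y w L : R) : 0 < x -> 0 < y ->
  1 + `|w| <= L * x -> 1 + `|w| <= L * y -> 
  x^-1 * y^-1 <= L ^+ 2 * gb 1 w.
Proof.
move=> hx hy h1 h2.
have hr : 0 < 1 + `|w| by apply: ltr_pwDl.
have hL : 0 < L.
  have : 0 < L * x by apply: lt_le_trans h1.
  by rewrite pmulr_lgt0.
have -> : x^-1 * y^-1 = L ^+ 2 * (L ^+ 2 * (x * y))^-1.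
  by field; rewrite !gt_eqF.
rewrite /gb; apply: ler_wpM2l; first by rewrite exprn_ge0 // ltW.
rewrite lef_pV2 ?posrE ?exprn_gt0 ?mulr_gt0 //.
have -> : L ^+ 2 * (x * y) = (L * x) * (L * y) by ring.
rewrite expr2; apply: ler_pM => //; exact: ltW.
Qed.

Lemma inv_ab_decay z l w L : 0 <= l <= L -> normc z <= 1 ->
  normc ((av l w)^-1) * normc ((bv z l w)^-1) <= QQ L ^+ 2 * gb 1 w.
Proof.
move=> hl hz; rewrite !ComplexField.Normc.normcV.
have [ha _] := na_ge l w (andP hl).1.
have [hb _] := nb_ge z l w (andP hl).1 hz.
apply: inv_xy_decay.
- exact: normc_gt0.
- exact: normc_gt0.
- exact: rho_le_a.
- exact: rho_le_b.
Qed.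
End P.

Local Open Scope classical_set_scope.
Section P2.
Context {R : realType}.
Local Open Scope complex_scope.
Variable c : R.
Hypothesis hc : 0 < c.

Local Notation nM := ComplexField.Normc.normcM.
Lemma nB (x y : R[i]) : normc (x - y) <= normc x + normc y.
Proof. by apply: le_trans (le_normcD _ _) _; rewrite normcN. Qed.
Lemma n1 : normc (1 : R[i]) = 1.
Proof. exact: ComplexField.Normc.normc1. Qed.
Lemma ns_le (z : R[i]) : normc z <= 1 -> normc (1 - z) <= 2.
Proof. move=> hz; apply: le_trans (nB _ _) _; rewrite n1; lra. Qed.
Lemma nonzero_of (x : R[i]) : c <= normc x -> x != 0.
Proof.
move=> h; apply/eqP => x0; move: h; rewrite x0 ComplexField.Normc.normc0.
by move=> h; have := lt_le_trans hc h; rewrite ltxx.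
Qed.

Lemma psi_eq z1 z2 l w : Psi c z1 z2 l w =
  z1 w * (av c l w)^-1 * (bv c (z2 w) l w)^-1.
Proof. by rewrite /Psi -/(av c l w) -/(bv c (z2 w) l w) invfM mulrA. Qed.

Lemma psi_bound (u z : R[i]) l w L : 0 <= l <= L -> normc u <= 1 -> normc z <= 1 ->
  normc (u * (av c l w)^-1 * (bv c z l w)^-1) <= QQ c L ^+ 2 * gb 1 w.
Proof.
move=> hl hu hz; rewrite !nM -mulrA.
have h := inv_ab_decay c hc z l w L hl hz.

apply: le_trans (ler_wpM2r _ hu) _; first by apply: mulr_ge0; exact: normc_ge0.
by rewrite mul1r.
Qed.

Definition dpsi (u z : R[i]) (l w : R) : R[i] :=
  - (u * ((av c l w)^-1 + (1 - z) * (bv c z l w)^-1) * (av c l w)^-1 * (bv c z l w)^-1).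

Lemma alg_id (a b h s u : R[i]) : a != 0 -> b != 0 -> a + h != 0 -> b + h * s != 0 ->
  u * (a + h)^-1 * (b + h * s)^-1 - u * a^-1 * b^-1 -
    h * (- (u * (a^-1 + s * b^-1) * a^-1 * b^-1)) =
  u * h ^+ 2 * ((a^-1 + s * b^-1) * (a^-1 + s * b^-1 + h * s * a^-1 * b^-1)
                - s * a^-1 * b^-1) * ((a + h)^-1 * (b + h * s)^-1).
Proof. by move=> ha hb hah hbh; field; rewrite hbh hah hb ha. Qed.

Lemma av_shift l l' w : av c l' w = av c l w + (l' - l)%:C.
Proof. by rewrite /av rmorphB /=; ring. Qed.
Lemma bv_shift z l l' w : bv c z l' w = bv c z l w + (l' - l)%:C * (1 - z).
Proof. by rewrite /bv (av_shift l l' w) rmorphB /=; ring. Qed.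

Lemma ninv_a l w : 0 <= l -> normc ((av c l w)^-1) <= c^-1.
Proof. by move=> hl; apply: ninv_le => //; case: (na_ge c hc l w hl). Qed.
Lemma ninv_b z l w : 0 <= l -> normc z <= 1 -> normc ((bv c z l w)^-1) <= c^-1.
Proof. by move=> hl hz; apply: ninv_le => //; case: (nb_ge c hc z l w hl hz). Qed.

Lemma nge0 (x : R[i]) : 0 <= normc x. Proof. exact: normc_ge0. Qed.
Lemma ia_ge0 : 0 <= c^-1. Proof. by rewrite invr_ge0 ltW. Qed.
Ltac nn := repeat first [exact: nge0 | apply: mulr_ge0 | exact: ia_ge0 | assumption | (apply: ns_le; assumption)].

Lemma nX_bound z l w : 0 <= l -> normc z <= 1 ->
  normc ((av c l w)^-1 + (1 - z) * (bv c z l w)^-1) <= 3 * c^-1.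
Proof.
move=> hl hz; apply: le_trans (le_normcD _ _) _; rewrite nM.
have h1 := ninv_a l w hl; have h2 := ninv_b z l w hl hz.
have h3 : normc (1 - z) * normc (bv c z l w)^-1 <= 2 * c^-1.
  by apply: ler_pM => //; try nn; exact: ns_le.
have := ia_ge0; lra.
Qed.

Lemma sab_bound z l w : 0 <= l -> normc z <= 1 ->
  normc ((1 - z) * (av c l w)^-1 * (bv c z l w)^-1) <= 2 * c^-1 * c^-1.
Proof.
move=> hl hz; rewrite !nM.
have h1 := ninv_a l w hl; have h2 := ninv_b z l w hl hz.
apply: ler_pM => //; try by nn.
by apply: ler_pM => //; nn.
Qed.

Lemma dpsi_bound u z l w L : 0 <= l <= L -> normc u <= 1 -> normc z <= 1 ->
  normc (dpsi u z l w) <= 3 * c^-1 * (QQ c L ^+ 2 * gb 1 w).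
Proof.
move=> hl hu hz; rewrite /dpsi normcN !nM -mulrA.
have h := inv_ab_decay c hc z l w L hl hz.
have hX := nX_bound z l w (andP hl).1 hz.
apply: ler_pM => //; try by nn.
rewrite -[X in _ <= X]mul1r; apply: ler_pM => //; nn.
Qed.

Definition K1 (L : R) := 3 * c^-1 * (3 * c^-1 + L * (2 * c^-1 * c^-1)) + 2 * c^-1 * c^-1.

Lemma Y_bound z l w (d : R) L : 0 <= l -> normc z <= 1 -> `|d| <= L ->
  normc (((av c l w)^-1 + (1 - z) * (bv c z l w)^-1) *
         ((av c l w)^-1 + (1 - z) * (bv c z l w)^-1 +
            d%:C * (1 - z) * (av c l w)^-1 * (bv c z l w)^-1)
         - (1 - z) * (av c l w)^-1 * (bv c z l w)^-1) <= K1 L.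
Proof.
move=> hl hz hd.
set X := (_ + _ * _).
set S := (1 - z) * _ * _.
have -> : d%:C * (1 - z) * (av c l w)^-1 * (bv c z l w)^-1 = d%:C * S by rewrite /S !mulrA.
have hX : normc X <= 3 * c^-1 := nX_bound z l w hl hz.
have hS : normc S <= 2 * c^-1 * c^-1 := sab_bound z l w hl hz.
have hL : 0 <= L by apply: le_trans hd; exact: normr_ge0.
have hXd : normc (X + d%:C * S) <= 3 * c^-1 + L * (2 * c^-1 * c^-1).
  apply: le_trans (le_normcD _ _) _; rewrite nM normc_real.
  apply: lerD => //; apply: ler_pM => //; try nn; exact: normr_ge0.
apply: le_trans (nB _ _) _; rewrite nM /K1.
apply: lerD => //; apply: ler_pM => //; try nn.
Qed.

Lemma rem_bound u z l l' w L : 0 <= l <= L -> 0 <= l' <= L ->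
  normc u <= 1 -> normc z <= 1 ->
  normc (u * (av c l' w)^-1 * (bv c z l' w)^-1 - u * (av c l w)^-1 * (bv c z l w)^-1
         - (l' - l)%:C * dpsi u z l w)
  <= (l' - l) ^+ 2 * (K1 L * (QQ c L ^+ 2 * gb 1 w)).
Proof.
move=> hl hl' hu hz.
have [ha _] := na_ge c hc l w (andP hl).1.
have [hb _] := nb_ge c hc z l w (andP hl).1 hz.
have [ha' _] := na_ge c hc l' w (andP hl').1.
have [hb' _] := nb_ge c hc z l' w (andP hl').1 hz.
have hdec := inv_ab_decay c hc z l' w L hl' hz.
have hd : `|l' - l| <= L.
  rewrite ler_norml; move/andP: hl => [h1 h2]; move/andP: hl' => [h3 h4].
  apply/andP; split; lra.
have hY := Y_bound z l w (l' - l) L (andP hl).1 hz hd.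
move: ha' hb' hdec; rewrite (av_shift l l' w) (bv_shift z l l' w) => ha' hb' hdec.
rewrite /dpsi alg_id; try exact: nonzero_of.
rewrite !nM.
have -> : normc (l' - l)%:C * normc (l' - l)%:C = (l' - l) ^+ 2.
  by rewrite normc_real -normrM -expr2 ger0_norm // sqr_ge0.
set P := normc (av c l w + (l' - l)%:C)^-1 * normc (bv c z l w + (l' - l)%:C * (1 - z))^-1.
set Y := normc (_ - _) in hY *.
have hP : 0 <= P by rewrite /P; nn.
have -> : normc u * (l' - l) ^+ 2 * Y * P = (l' - l) ^+ 2 * (normc u * (Y * P)) by ring.
apply: ler_wpM2l; first exact: sqr_ge0.
rewrite -[X in _ <= X]mul1r.
apply: ler_pM => //; try nn.
apply: ler_pM => //; try nn.
Qed.

Lemma alg_id2 (a l u ut z zt : R[i]) : a != 0 -> a - l * z != 0 -> a - l * zt != 0 ->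
  u * a^-1 * (a - l * z)^-1 - ut * a^-1 * (a - l * zt)^-1 =
  (u - ut) * (a^-1 * (a - l * z)^-1) + ut * l * (z - zt) * (a^-1 * (a - l * z)^-1) * (a - l * zt)^-1.
Proof. by move=> h1 h2 h3; field; rewrite h1 h2 h3. Qed.

Lemma diff_bound u z ut zt l w L (dl : R) : 0 <= l <= L ->
  normc u <= 1 -> normc z <= 1 -> normc ut <= 1 -> normc zt <= 1 ->
  normc (u - ut) <= dl -> normc (z - zt) <= dl ->
  normc (u * (av c l w)^-1 * (bv c z l w)^-1 - ut * (av c l w)^-1 * (bv c zt l w)^-1)
  <= dl * ((1 + L * c^-1) * (QQ c L ^+ 2 * gb 1 w)).
Proof.
move=> hl hu hz hut hzt hd1 hd2.
have [ha _] := na_ge c hc l w (andP hl).1.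
have [hb _] := nb_ge c hc z l w (andP hl).1 hz.
have [hbt _] := nb_ge c hc zt l w (andP hl).1 hzt.
have hdec := inv_ab_decay c hc z l w L hl hz.
have hbt' := ninv_b zt l w (andP hl).1 hzt.
move: hb hbt hdec hbt'; rewrite /bv => hb hbt hdec hbt'.
rewrite alg_id2; try exact: nonzero_of.
rewrite -/(bv c z l w) -/(bv c zt l w) in hdec hbt' *.
set N := (av c l w)^-1 * (bv c z l w)^-1 in hdec *.
have hN : normc N <= QQ c L ^+ 2 * gb 1 w by rewrite /N nM.
have hd0 : 0 <= dl by apply: le_trans hd1; exact: nge0.
have hl0 : 0 <= l := (andP hl).1.
have hlL : l <= L := (andP hl).2.
apply: le_trans (le_normcD _ _) _; rewrite !nM normc_real ger0_norm //.
set G := QQ c L ^+ 2 * gb 1 w in hN *.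
have hG : 0 <= G by apply: le_trans hN; exact: nge0.
have hN' : normc (av c l w)^-1 * normc (bv c z l w)^-1 <= G by rewrite -nM.
have h1 : normc (u - ut) * (normc (av c l w)^-1 * normc (bv c z l w)^-1) <= dl * G by apply: ler_pM => //; nn.
have h2 : normc ut * l * normc (z - zt) * (normc (av c l w)^-1 * normc (bv c z l w)^-1) * normc (bv c zt l w)^-1 <=
          1 * L * dl * G * c^-1.
  apply: ler_pM => //; try nn.
  apply: ler_pM => //; try nn.
  apply: ler_pM => //; try nn.
  apply: ler_pM => //; try nn.
have -> : dl * ((1 + L * c^-1) * G) = dl * G + 1 * L * dl * G * c^-1 by rewrite /G; ring.
exact: lerD.
Qed.

Lemma diff_crude u z ut zt l w L : 0 <= l <= L ->
  normc u <= 1 -> normc z <= 1 -> normc ut <= 1 -> normc zt <= 1 ->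
  normc (u * (av c l w)^-1 * (bv c z l w)^-1 - ut * (av c l w)^-1 * (bv c zt l w)^-1)
  <= 2 * (QQ c L ^+ 2 * gb 1 w).
Proof.
move=> hl hu hz hut hzt.
apply: le_trans (nB _ _) _.
have := psi_bound u z l w L hl hu hz; have := psi_bound ut zt l w L hl hut hzt.
lra.
Qed.
End P2.

Local Open Scope classical_set_scope.
Section F1.
Context {R : realType}.
Local Open Scope complex_scope.
Notation mu := (@lebesgue_measure R).
Implicit Types f g : R -> R[i].

Lemma cmeas_av (c l : R) : cmeasurable (fun w => av c l w).
Proof.
rewrite /av; apply: cmeas_add; last exact: cmeas_cst.
apply: cmeas_add; first exact: cmeas_cst.
apply: cmeas_mul; first exact: cmeas_cst.
exact: cmeas_id.
Qed.

Lemma cmeas_bv (c l : R) z2 : cmeasurable z2 -> cmeasurable (fun w => bv c (z2 w) l w).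
Proof.
move=> h; rewrite /bv; apply: cmeas_sub; first exact: cmeas_av.
by apply: cmeas_mul => //; exact: cmeas_cst.
Qed.

Lemma cmeas_psi (c l : R) z1 z2 : cmeasurable z1 -> cmeasurable z2 ->
  cmeasurable (Psi c z1 z2 l).
Proof.
move=> h1 h2.
have -> : Psi c z1 z2 l = fun w => z1 w * (av c l w * bv c (z2 w) l w)^-1 by [].
apply: cmeas_mul => //; apply: cmeas_inv; apply: cmeas_mul.
  exact: cmeas_av.
exact: cmeas_bv.
Qed.

Lemma cmeas_dpsi (c l : R) z1 z2 : cmeasurable z1 -> cmeasurable z2 ->
  cmeasurable (fun w => dpsi c (z1 w) (z2 w) l w).
Proof.
move=> h1 h2; rewrite /dpsi; apply: cmeas_opp.
have ha := cmeas_inv _ (cmeas_av c l).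
have hb := cmeas_inv _ (cmeas_bv c l _ h2).
apply: cmeas_mul => //; apply: cmeas_mul => //; apply: cmeas_mul => //.
apply: cmeas_add => //; apply: cmeas_mul => //.
by apply: cmeas_sub => //; exact: cmeas_cst.
Qed.

Lemma cint_sub f g : cint f -> cint g -> cint (fun w => f w - g w).
Proof.
move=> [f1 f2] [g1 g2]; split.
- have -> : (EFin \o (fun w => complex.Re (f w - g w))) =
    ((EFin \o (fun w => complex.Re (f w))) \- (EFin \o (fun w => complex.Re (g w))))%E.
    by apply: funext => w /=; case: (f w) => ??; case: (g w).
  exact: integrableB.
- have -> : (EFin \o (fun w => complex.Im (f w - g w))) =
    ((EFin \o (fun w => complex.Im (f w))) \- (EFin \o (fun w => complex.Im (g w))))%E.
    by apply: funext => w /=; case: (f w) => ??; case: (g w).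
  exact: integrableB.
Qed.

Lemma cint_scale (r : R) f : cint f -> cint (fun w => r%:C * f w).
Proof.
move=> [f1 f2]; split.
- have -> : (EFin \o (fun w => complex.Re (r%:C * f w))) =
    (fun w => r%:E * (EFin \o (fun w => complex.Re (f w))) w)%E.
    by apply: funext => w /=; case: (f w) => ?? /=; rewrite mul0r subr0.
  exact: integrableZl.
- have -> : (EFin \o (fun w => complex.Im (r%:C * f w))) =
    (fun w => r%:E * (EFin \o (fun w => complex.Im (f w))) w)%E.
    by apply: funext => w /=; case: (f w) => ?? /=; rewrite mul0r addr0.
  exact: integrableZl.
Qed.

Lemma gbk_integrable (k b : R) : 0 < b -> mu.-integrable setT (EFin \o (fun w => k * gb b w)).
Proof.
move=> hb.
have -> : (EFin \o (fun w => k * gb b w)) = (fun w => k%:E * (EFin \o gb b) w)%E by [].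
by apply: integrableZl => //; exact: (gb_integrable b hb).
Qed.

Lemma gbk_Rint (k b : R) : 0 < b -> Rintegral mu setT (fun w => k * gb b w) = k * (2 * b^-1).
Proof. by move=> hb; rewrite RintegralZl ?(gb_Rint b hb) //; exact: (gb_integrable b hb). Qed.
End F1.

Local Open Scope classical_set_scope.
Section F2.
Context {R : realType}.
Local Open Scope complex_scope.
Notation mu := (@lebesgue_measure R).
Implicit Types f g : R -> R[i].
Variable c : R.
Hypothesis hc : 0 < c.

Definition DD (z1 z2 : R -> R[i]) (l : R) := cintegral (fun w => dpsi c (z1 w) (z2 w) l w).
Definition CR (L : R) := 2 * (K1 c L * QQ c L ^+ 2 * 2).

Lemma cint_psi z1 z2 l L : admissible z1 z2 -> 0 <= l <= L -> cint (Psi c z1 z2 l).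
Proof.
move=> [m1 [m2 [b1 b2]]] hl.
apply: (cint_bound _ (fun w => QQ c L ^+ 2 * gb 1 w)).
- exact: cmeas_psi.
- exact: gbk_integrable.
- by move=> w; rewrite psi_eq; exact: psi_bound.
Qed.

Lemma cint_dpsi z1 z2 l L : admissible z1 z2 -> 0 <= l <= L ->
  cint (fun w => dpsi c (z1 w) (z2 w) l w).
Proof.
move=> [m1 [m2 [b1 b2]]] hl.
apply: (cint_bound _ (fun w => (3 * c^-1 * QQ c L ^+ 2) * gb 1 w)).
- exact: cmeas_dpsi.
- exact: gbk_integrable.
- by move=> w; rewrite -mulrA; exact: dpsi_bound.
Qed.

Lemma DD_bound z1 z2 l L : admissible z1 z2 -> 0 <= l <= L ->
  normc (DD z1 z2 l) <= 2 * (3 * c^-1 * QQ c L ^+ 2 * 2).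
Proof.
move=> [m1 [m2 [b1 b2]]] hl.
rewrite /DD.
have := (cintegral_norm _ (fun w => (3 * c^-1 * QQ c L ^+ 2) * gb 1 w)
  (cmeas_dpsi c l _ _ m1 m2) (gbk_integrable _ _ ltr01)).
rewrite gbk_Rint // invr1 mulr1; apply.
by move=> w; rewrite -mulrA; exact: dpsi_bound.
Qed.

Lemma unif_rem z1 z2 L l l' : admissible z1 z2 -> 0 <= l <= L -> 0 <= l' <= L ->
  normc (PsiInt c z1 z2 l' - PsiInt c z1 z2 l - (l' - l)%:C * DD z1 z2 l)
  <= (l' - l) ^+ 2 * CR L.
Proof.
move=> adm hl hl'.
have i1 := cint_psi z1 z2 l' L adm hl'.
have i0 := cint_psi z1 z2 l L adm hl.
have id := cint_dpsi z1 z2 l L adm hl.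
have [m1 [m2 [b1 b2]]] := adm.
rewrite /PsiInt /DD -cintegralZ // -cintegralB // -cintegralB //; last first.
- exact: cint_scale.
- exact: cint_sub.
have := (cintegral_norm _ (fun w => ((l' - l) ^+ 2 * K1 c L * QQ c L ^+ 2) * gb 1 w)
  _ (gbk_integrable _ _ ltr01)).
rewrite gbk_Rint // invr1 mulr1 => h.
have -> : (l' - l) ^+ 2 * CR L = 2 * ((l' - l) ^+ 2 * K1 c L * QQ c L ^+ 2 * 2).
  by rewrite /CR; ring.
apply: h.
- apply: cmeas_sub; first by apply: cmeas_sub; exact: cmeas_psi.
  apply: cmeas_mul; first exact: cmeas_cst.
  exact: cmeas_dpsi.
- move=> w; rewrite !psi_eq.
  have := rem_bound c hc (z1 w) (z2 w) l l' w L hl hl' (b1 w) (b2 w).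
  by rewrite !mulrA.
Qed.
End F2.

Local Open Scope classical_set_scope.
Local Open Scope complex_scope.

Lemma CR_ge0 {R : realType} (c L : R) : 0 < c -> 0 <= L -> 0 <= CR c L.
Proof.
move=> hc hL; rewrite /CR /K1.
have h0 : 0 <= c^-1 by rewrite invr_ge0 ltW.
apply: mulr_ge0 => //; apply: mulr_ge0 => //; apply: mulr_ge0 => //; last exact: sqr_ge0.
apply: addr_ge0; last by apply: mulr_ge0 => //; apply: mulr_ge0.
apply: mulr_ge0; first by apply: mulr_ge0.
apply: addr_ge0; first by apply: mulr_ge0.
by apply: mulr_ge0 => //; apply: mulr_ge0 => //; apply: mulr_ge0.
Qed.

Lemma div_norm {R : realType} (x : R[i]) (h : R) : h != 0 ->
  normc (x / h%:C) = normc x / `|h|.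
Proof. by move=> hh; rewrite ComplexField.Normc.normcM ComplexField.Normc.normcV normc_real. Qed.

Lemma C1_part (R : realType) (c : R) (hc : 0 < c) (z1 z2 : R -> R[i]) :
  admissible z1 z2 -> C1_on_Rplus (PsiInt c z1 z2) (DD c z1 z2).
Proof.
move=> adm; split.
- move=> l hl e he.
  have hC := CR_ge0 c (l + 1) hc (ltW (ltr_pwDr ltr01 hl)).
  set C := CR c (l + 1) in hC *.
  have hC1 : 0 < C + 1 by lra.
  exists (Num.min 1 (e / (C + 1))); split.
    by rewrite lt_min ltr01 divr_gt0.
  move=> h hh0; rewrite lt_min => /andP[hh1 hh2] hlh.
  have hl1 : 0 <= l <= l + 1 by rewrite hl lerDl ler01.
  have hl2 : 0 <= l + h <= l + 1.
    rewrite hlh /= lerD2l; apply: le_trans (ler_norm _) _; exact: ltW.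
  have := unif_rem c hc z1 z2 (l + 1) l (l + h) adm hl1 hl2.
  have -> : l + h - l = h by ring.
  rewrite -/C => hr.
  have -> : (PsiInt c z1 z2 (l + h) - PsiInt c z1 z2 l) / h%:C - DD c z1 z2 l =
      (PsiInt c z1 z2 (l + h) - PsiInt c z1 z2 l - h%:C * DD c z1 z2 l) / h%:C.
    field; by rewrite eq_complex /= negb_and hh0.
  rewrite div_norm // ltr_pdivrMr ?normr_gt0 //.
  move: hr; set N := normc _ => hr.
  have ha : 0 < `|h| by rewrite normr_gt0.
  have hh : h ^+ 2 = `|h| ^+ 2 by rewrite real_normK // num_real.
  rewrite hh in hr.
  move: hh2; rewrite ltr_pdivlMr // => hh2.
  nra.
- move=> l hl e he.
  have hC := CR_ge0 c (l + 1) hc (ltW (ltr_pwDr ltr01 hl)).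
  set C := CR c (l + 1) in hC *.
  have hC1 : 0 < 2 * C + 1 by lra.
  exists (Num.min 1 (e / (2 * C + 1))); split.
    by rewrite lt_min ltr01 divr_gt0.
  move=> l' hl' ; rewrite lt_min => /andP[hd1 hd2].
  have hl1 : 0 <= l <= l + 1 by rewrite hl lerDl ler01.
  have hl2 : 0 <= l' <= l + 1.
    rewrite hl' /=; move: hd1; rewrite ltr_norml => /andP[_ ?]; lra.
  have r1 := unif_rem c hc z1 z2 (l + 1) l l' adm hl1 hl2.
  have r2 := unif_rem c hc z1 z2 (l + 1) l' l adm hl2 hl1.
  rewrite -/C in r1 r2.
  have [->|hne] := eqVneq l' l.
    by rewrite subrr ComplexField.Normc.normc0.
  have ha : 0 < `|l' - l| by rewrite normr_gt0 subr_eq0.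
  have key : `|l' - l| * normc (DD c z1 z2 l' - DD c z1 z2 l) <= 2 * (`|l' - l| ^+ 2 * C).
    rewrite -normc_real -ComplexField.Normc.normcM.
    have -> : (l' - l)%:C * (DD c z1 z2 l' - DD c z1 z2 l) =
       (PsiInt c z1 z2 l' - PsiInt c z1 z2 l - (l' - l)%:C * DD c z1 z2 l) +
       (PsiInt c z1 z2 l - PsiInt c z1 z2 l' - (l - l')%:C * DD c z1 z2 l').
      by rewrite !rmorphB /=; ring.
    apply: le_trans (le_normcD _ _) _.
    have e2 : (l - l') ^+ 2 = (l' - l) ^+ 2 by ring.
    rewrite e2 in r2.
    rewrite -(real_normK (num_real (l' - l))) in r1 r2.
    apply: le_trans (lerD r1 r2) _. rewrite normc_real; lra.
  move: hd2; rewrite ltr_pdivlMr // => hd2.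
  move: key; set N := normc _ => key.
  have hN : 0 <= N by exact: normc_ge0.
  nra.
Qed.

Local Open Scope classical_set_scope.
Local Open Scope complex_scope.

Lemma gb2_integrable {R : realType} (k1 b1 k2 b2 : R) : 0 < b1 -> 0 < b2 ->
  (@lebesgue_measure R).-integrable setT (EFin \o (fun w => k1 * gb b1 w + k2 * gb b2 w)) /\
  Rintegral (@lebesgue_measure R) setT (fun w => k1 * gb b1 w + k2 * gb b2 w) =
    k1 * (2 * b1^-1) + k2 * (2 * b2^-1).
Proof.
move=> h1 h2.
have i1 := gbk_integrable k1 b1 h1; have i2 := gbk_integrable k2 b2 h2.
split.
- have -> : (EFin \o (fun w => k1 * gb b1 w + k2 * gb b2 w)) =
     ((EFin \o (fun w => k1 * gb b1 w)) \+ (EFin \o (fun w => k2 * gb b2 w))) by [].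

  exact: integrableD.
- by rewrite RintegralD // !gbk_Rint.
Qed.

Lemma gb_tail {R : realType} (W w : R) : 1 <= W -> W <= `|w| -> gb 1 w <= 4 * gb W w.
Proof.
move=> hW hw; rewrite /gb.
have hp : 0 < W + `|w| by apply: ltr_pwDl; lra.
have hq : 0 < 1 + `|w| by apply: ltr_pwDl; lra.
have -> : 4 * ((W + `|w|) ^+ 2)^-1 = ((W + `|w|) ^+ 2 / 4)^-1.
  by field; rewrite gt_eqF.
rewrite lef_pV2 ?posrE ?divr_gt0 ?exprn_gt0 //.
rewrite ler_pdivrMr //; nra.
Qed.

Lemma fin_ineq {R : realType} (A Q2 d Wi : R) : 0 <= A -> 0 <= Q2 -> 0 <= d -> 0 <= Wi ->
  2 * (d * A * (2 * 1^-1) + 8 * Q2 * (2 * Wi)) <= (4 * A + 32 * Q2 + 1) * (d + Wi).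
Proof. move=> *; rewrite invr1; nra. Qed.

Lemma fin_ineq2 {R : realType} (A Q2 d : R) : 0 <= A -> 0 <= Q2 -> 0 <= d ->
  2 * (d * A * (2 * 1^-1)) <= (4 * A + 32 * Q2 + 1) * d.
Proof. move=> *; rewrite invr1; nra. Qed.

Lemma diff_int {R : realType} (c L l : R) (hc : 0 < c) z1 z2 zt1 zt2 :
  admissible z1 z2 -> admissible zt1 zt2 -> 0 <= l <= L ->
  PsiInt c z1 z2 l - PsiInt c zt1 zt2 l =
  cintegral (fun w => Psi c z1 z2 l w - Psi c zt1 zt2 l w).
Proof.
move=> a1 a2 hl; rewrite cintegralB //.
- exact: (cint_psi c hc z1 z2 l L a1 hl).
- exact: (cint_psi c hc zt1 zt2 l L a2 hl).
Qed.

Lemma part2 {R : realType} (c eta0 : R) (hc : 0 < c) (heta0 : 0 < eta0) :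
  exists K : R, 0 < K /\
     forall z1 z2 zt1 zt2 : R -> R[i], admissible z1 z2 -> admissible zt1 zt2 ->
     (forall (W delta : R), 1 <= W ->
        (forall w : R, - W <= w <= W ->
           normc (z1 w - zt1 w) <= delta /\ normc (z2 w - zt2 w) <= delta) ->
        forall l : R, 0 <= l <= eta0 ->
          normc (PsiInt c z1 z2 l - PsiInt c zt1 zt2 l) <= K * (delta + W^-1)) /\
     (forall delta : R,
        (forall w : R,
           normc (z1 w - zt1 w) <= delta /\ normc (z2 w - zt2 w) <= delta) ->
        forall l : R, 0 <= l <= eta0 ->
          normc (PsiInt c z1 z2 l - PsiInt c zt1 zt2 l) <= K * delta).
Proof.
set Q2 := QQ c eta0 ^+ 2.
set A := (1 + eta0 * c^-1) * Q2.
have hQ2 : 0 <= Q2 by exact: sqr_ge0.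
have hA : 0 <= A.
  apply: mulr_ge0 => //; apply: addr_ge0 => //; apply: mulr_ge0; first exact: ltW.
  by rewrite invr_ge0 ltW.
exists (4 * A + 32 * Q2 + 1); split; first by lra.
move=> z1 z2 zt1 zt2 a1 a2.
have a1' := a1; have a2' := a2.
move: a1' a2' => [m1 [m2 [b1 b2]]] [mt1 [mt2 [bt1 bt2]]].
split.
- move=> W d hW hd l hl.
  have hd0 : 0 <= d.
    have [h _] := hd 0 ltac:(apply/andP; split; lra).
    by apply: le_trans h; exact: normc_ge0.
  have hW0 : 0 < W by lra.
  have [gi gR] := gb2_integrable (d * A) 1 (8 * Q2) W ltr01 hW0.
  rewrite (diff_int c eta0 l hc _ _ _ _ a1 a2 hl).
  have := cintegral_norm _ _ _ gi.
  rewrite gR => h.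
  have hWi : 0 <= W^-1 by rewrite invr_ge0 ltW.
  have hF := fin_ineq A Q2 d W^-1 hA hQ2 hd0 hWi.
  apply: le_trans hF.
  apply: h.
  + by apply: cmeas_sub; exact: cmeas_psi.
  + move=> w; rewrite !psi_eq.
    have hg1 : 0 <= gb 1 w := gb_ge0 1 w ltr01.
    have hgW : 0 <= gb W w := gb_ge0 W w hW0.
    have [hw|hw] := lerP `|w| W.
    * have [e1 e2] := hd w ltac:(by rewrite -ler_norml).
      have := diff_bound c hc (z1 w) (z2 w) (zt1 w) (zt2 w) l w eta0 d hl
               (b1 w) (b2 w) (bt1 w) (bt2 w) e1 e2.
      rewrite -/Q2 => h1.
      have h2 : 0 <= 8 * Q2 * gb W w by apply: mulr_ge0 => //; apply: mulr_ge0.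
      apply: le_trans h1 _; rewrite /A.
      have -> : d * ((1 + eta0 * c^-1) * (Q2 * gb 1 w)) =
                d * ((1 + eta0 * c^-1) * Q2) * gb 1 w by ring.
      lra.
    * have := diff_crude c hc (z1 w) (z2 w) (zt1 w) (zt2 w) l w eta0 hl
               (b1 w) (b2 w) (bt1 w) (bt2 w).
      rewrite -/Q2 => h1.
      have h3 := gb_tail W w hW (ltW hw).
      have h4 : 0 <= d * A * gb 1 w by apply: mulr_ge0 => //; apply: mulr_ge0.
      apply: le_trans h1 _.
      have h5 : Q2 * gb 1 w <= Q2 * (4 * gb W w) by apply: ler_wpM2l.
      lra.
- move=> d hd l hl.
  have hd0 : 0 <= d.
    have [h _] := hd 0.
    by apply: le_trans h; exact: normc_ge0.
  rewrite (diff_int c eta0 l hc _ _ _ _ a1 a2 hl).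
  have := cintegral_norm _ _ _ (gbk_integrable (d * A) 1 ltr01).
  rewrite gbk_Rint // => h.
  have hF := fin_ineq2 A Q2 d hA hQ2 hd0.
  apply: le_trans hF.
  apply: h.
  + by apply: cmeas_sub; exact: cmeas_psi.
  + move=> w; rewrite !psi_eq.
    have [e1 e2] := hd w.
    have := diff_bound c hc (z1 w) (z2 w) (zt1 w) (zt2 w) l w eta0 d hl
             (b1 w) (b2 w) (bt1 w) (bt2 w) e1 e2.
    rewrite -/Q2 => h1.
    apply: le_trans h1 _; rewrite /A.
    have -> : d * ((1 + eta0 * c^-1) * (Q2 * gb 1 w)) =
              d * ((1 + eta0 * c^-1) * Q2) * gb 1 w by ring.
    by [].
Qed.

End Helpers.
Import Helpers.

Theorem lemma1 (R : realType) (c eta0 : R) (hc : 0 < c) (heta0 : 0 < eta0) :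
  (* (i) *)
  (exists M : R, forall z1 z2 : R -> R[i], admissible z1 z2 ->
     exists D : R -> R[i], C1_on_Rplus (PsiInt c z1 z2) D /\
       (forall l : R, 0 <= l <= eta0 -> normc (D l) <= M)) /\
  (* (ii) *)
  (exists K : R, 0 < K /\
     forall z1 z2 zt1 zt2 : R -> R[i], admissible z1 z2 -> admissible zt1 zt2 ->
     (* finite W >= 1; delta is any upper bound of
        max_i sup_{w in [-W,W]} |z_i w - zt_i w| *)
     (forall (W delta : R), 1 <= W ->
        (forall w : R, - W <= w <= W ->
           normc (z1 w - zt1 w) <= delta /\ normc (z2 w - zt2 w) <= delta) ->
        forall l : R, 0 <= l <= eta0 ->
          normc (PsiInt c z1 z2 l - PsiInt c zt1 zt2 l) <= K * (delta + W^-1)) /\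
     (* W = infinity *)
     (forall delta : R,
        (forall w : R,
           normc (z1 w - zt1 w) <= delta /\ normc (z2 w - zt2 w) <= delta) ->
        forall l : R, 0 <= l <= eta0 ->
          normc (PsiInt c z1 z2 l - PsiInt c zt1 zt2 l) <= K * delta)).
Proof.
split; last exact: part2.
exists (2 * (3 * c^-1 * QQ c eta0 ^+ 2 * 2)) => z1 z2 adm.
exists (DD c z1 z2); split; first exact: C1_part.
by move=> l hl; exact: (DD_bound c hc z1 z2 l eta0 adm hl).
Qed.
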